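(* Let $\Theta$ be a branch of a tableau of $\mathbf{TAB}_{\mathbf{IB}}$, let $N^\Theta$ be the set of nominals occurring in $\Theta$, and let $\prec_\Theta$ be the generation relation on $N^\Theta$. Then the structure $G=(N^\Theta,\prec_\Theta)$ is a finite set of well-founded and finitely branching trees.
   Context: Hybrid language: fix disjoint countably infinite sets $\mathbf{Prop}$ (propositional variables) and $\mathbf{Nom}$ (nominals). Formulas: $\varphi ::= p \mid i \mid \neg\varphi \mid \varphi\land\varphi \mid \Diamond\varphi \mid @_i\varphi$ with $p\in\mathbf{Prop}$, $i\in\mathbf{Nom}$; $\Box\varphi$ abbreviates $\neg\Diamond\neg\varphi$. Tableau calculus $\mathbf{TAB}_{\mathbf{IB}}$. A tableau is a well-founded tree whose nodes are formulas of the form $@_i\varphi$; its root is a formula $@_i\varphi$ (the root formula) where $i$ does not occur in $\varphi$. A branch is a maximal path; $\varphi\in\Theta$ means $\varphi$ occurs on branch $\Theta$. Each branch is extended by applying the rules below to its formulas as often as possible, except that no further formula is added to a branch once either (i) every new formula generated by applying any rule already occurs on the branch, or (ii) the branch is closed, i.e. contains $@_i\varphi$ and $@_i\neg\varphi$ for some formula $\varphi$ and nominal $i$. An accessibility formula is a formula $@_i\Diamond j$ added by rule $[\Diamond]$ (with $j$ the new nominal). Rules (premises already on the branch; conclusions added to it): [$\neg\neg$] from $@_i\neg\neg\varphi$ add $@_i\varphi$; [$\land$] from $@_i(\varphi\land\psi)$ add $@_i\varphi$ and $@_i\psi$; [$\neg\land$] from $@_i\neg(\varphi\land\psi)$ split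 the branch into one extended by $@_i\neg\varphi$ and one extended by $@_i\neg\psi$; [$\Diamond$] from $@_i\Diamond\varphi$, which is not an accessibility formula, add $@_i\Diamond j$ and $@_j\varphi$ where $j$ is a nominal not occurring on the branch; this rule is applied at most once per formula, and only if $i$ is a quasi-urfather on the branch (defined below); [$\neg\Diamond$] from $@_i\neg\Diamond\varphi$ and $@_i\Diamond j$ add $@_j\neg\varphi$; [$\Box_{sym}$] from $@_i\Box\varphi$ and $@_j\Diamond i$ add $@_j\varphi$; [$@$] from $@_i@_j\varphi$ add $@_j\varphi$; [$\neg@$] from $@_i\neg@_j\varphi$ add $@_j\neg\varphi$; [$Id$] from $@_i\varphi$, which is not an accessibility formula, and $@_i j$ add $@_j\varphi$; [$Ref$] for any nominal $i$ occurring on the branch add $@_i i$; ($\mathcal{I}$) for any nominal $i$ occurring on the branch add $@_i\neg\Diamond i$. Auxiliary notions for a branch $\Theta$. $@_i\varphi$ is a quasi-subformula of $@_j\psi$ if $\varphi$ is a subformula of $\psi$, or $\varphi=\neg\chi$ with $\chi$ a subformula of $\psi$. For a nominal $i$ occurring in $\Theta$, $T^\Theta(i)=\{\varphi \mid @_i\varphi\in\Theta$ and $@_i\varphi$ is a quasi-subformula of the root formula$\}$. Nominals $i,j$ are twins if $T^\Theta(i)=T^\Theta(j)$. The generation relation: $i\prec_\Theta j$ if $j$ was introduced by applying $[\Diamond]$ to a formula $@_i\Diamond\varphi$ (equivalently, the accessibility formula $@_i\Diamond j$ is in $\Theta$); $\prec_\Theta^*$ is its reflexive transitive closure. A nominal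 $i$ is a quasi-urfather on $\Theta$ if there are no twins $j\neq k$ with $j\prec_\Theta^* i$ and $k\prec_\Theta^* i$. *)

(* Defs.v *)
From Stdlib Require Import List Relations.
Import ListNotations.

(* Prop and Nom are disjoint countably infinite sets: both indexed by nat,
   kept disjoint by the constructors. *)
Definition nom := nat.

Inductive form : Type :=
| PVar : nat -> form
| Nom  : nom -> form
| Neg  : form -> form
| And  : form -> form -> form
| Dia  : form -> form
| At   : nom -> form -> form.

Definition Box (f : form) : form := Neg (Dia (Neg f)).

(* A tableau node @_i phi is represented as the pair (i, phi). *)
Definition tform := (nom * form)%type.

Fixpoint noms (f : form) : list nom :=
  match f with
  | PVar _ => []
  | Nom i => [i]
  | Neg g => noms g
  | And g h => noms g ++ noms h
  | Dia g => noms g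
  | At i g => i :: noms g
  end.

Fixpoint subf (f g : form) : Prop :=
  f = g \/
  match g with
  | PVar _ | Nom _ => False
  | Neg h => subf f h
  | And h1 h2 => subf f h1 \/ subf f h2
  | Dia h => subf f h
  | At _ h => subf f h
  end.

(* State of a branch during its construction: the formulas on the branch,
   the accessibility formulas @_i <> j (recorded as pairs (i,j)) added by
   rule [Dia], and the formulas @_i <> phi to which [Dia] has been applied. *)
Record state : Type := mkState {
  fs : list tform;
  acc : list (nom * nom);
  dused : list tform
}.

Definition occurs (S : state) (i : nom) : Prop :=
  exists j f, In (j, f) (fs S) /\ (i = j \/ In i (noms f)).

Definition closed (S : state) : Prop :=
  exists i f, In (i, f) (fs S) /\ In (i, Neg f) (fs S).

Definition is_acc_formula (S : state) (t : tform) : Prop :=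
  exists j, snd t = Dia (Nom j) /\ In (fst t, j) (acc S).

Definition qsub (phi0 : form) (f : form) : Prop :=
  subf f phi0 \/ exists g, f = Neg g /\ subf g phi0.

(* twins: T(j) = T(k), with T(i) = { phi | @_i phi in S, quasi-subformula of root } *)
Definition twins (phi0 : form) (S : state) (j k : nom) : Prop :=
  occurs S j /\ occurs S k /\
  forall f, qsub phi0 f -> (In (j, f) (fs S) <-> In (k, f) (fs S)).

Definition gen_st (S : state) (i j : nom) : Prop := In (i, j) (acc S).

Definition quasi_urfather (phi0 : form) (S : state) (i : nom) : Prop :=
  ~ exists j k, j <> k /\ twins phi0 S j k /\
      clos_refl_trans nom (gen_st S) j i /\ clos_refl_trans nom (gen_st S) k i.

Definition add (S : state) (l : list tform) : state :=
  mkState (fs S ++ l) (acc S) (dused S).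

Inductive rule_app (phi0 : form) (S : state) : state -> Prop :=
| R_negneg i f : In (i, Neg (Neg f)) (fs S) -> rule_app phi0 S (add S [(i, f)])
| R_and i f g : In (i, And f g) (fs S) -> rule_app phi0 S (add S [(i, f); (i, g)])
| R_negand_l i f g : In (i, Neg (And f g)) (fs S) -> rule_app phi0 S (add S [(i, Neg f)])
| R_negand_r i f g : In (i, Neg (And f g)) (fs S) -> rule_app phi0 S (add S [(i, Neg g)])
| R_dia i f j :
    In (i, Dia f) (fs S) -> ~ is_acc_formula S (i, Dia f) ->
    ~ In (i, Dia f) (dused S) -> quasi_urfather phi0 S i -> ~ occurs S j ->
    rule_app phi0 S (mkState (fs S ++ [(i, Dia (Nom j)); (j, f)])
                             (acc S ++ [(i, j)]) (dused S ++ [(i, Dia f)]))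
| R_negdia i f j : In (i, Neg (Dia f)) (fs S) -> In (i, Dia (Nom j)) (fs S) ->
    rule_app phi0 S (add S [(j, Neg f)])
| R_boxsym i f j : In (i, Box f) (fs S) -> In (j, Dia (Nom i)) (fs S) ->
    rule_app phi0 S (add S [(j, f)])
| R_at i j f : In (i, At j f) (fs S) -> rule_app phi0 S (add S [(j, f)])
| R_negat i j f : In (i, Neg (At j f)) (fs S) -> rule_app phi0 S (add S [(j, Neg f)])
| R_id i f j : In (i, f) (fs S) -> ~ is_acc_formula S (i, f) -> In (i, Nom j) (fs S) ->
    rule_app phi0 S (add S [(j, f)])
| R_ref i : occurs S i -> rule_app phi0 S (add S [(i, Nom i)])
| R_irr i : occurs S i -> rule_app phi0 S (add S [(i, Neg (Dia (Nom i)))]).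

Definition step (phi0 : form) (S S' : state) : Prop :=
  ~ closed S /\ rule_app phi0 S S' /\
  exists t, In t (fs S') /\ ~ In t (fs S).

Definition init_state (i0 : nom) (phi0 : form) : state :=
  mkState [(i0, phi0)] [] [].

(* A branch of a tableau with root formula @_i0 phi0, given as the sequence of
   its construction stages: each stage extends the previous one by a legal
   rule application, and the branch only stops growing when no legal
   extension exists (maximality). Infinite branches are allowed. *)
Definition is_branch (i0 : nom) (phi0 : form) (th : nat -> state) : Prop :=
  th 0 = init_state i0 phi0 /\
  forall n, step phi0 (th n) (th (S n)) \/
            (th (S n) = th n /\ ~ exists S', step phi0 (th n) S').

Definition branch_noms (th : nat -> state) (i : nom) : Prop :=
  exists n, occurs (th n) i.

Definition gen (th : nat -> state) (i j : nom) : Prop :=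
  exists n, In (i, j) (acc (th n)).

(* (N, R) is a finite set of well-founded, finitely branching trees:
   R relates elements of N, every node has at most one parent, R is
   well-founded (every node has finitely many ancestors), there are finitely
   many roots (parentless nodes) and every node descends from one of them,
   and every node has finitely many children. *)
Definition finite_forest_wf_fb (N : nom -> Prop) (R : nom -> nom -> Prop) : Prop :=
  (forall i j, R i j -> N i /\ N j) /\
  (forall i j k, R j i -> R k i -> j = k) /\
  well_founded R /\
  (exists roots : list nom,
      (forall r, In r roots -> N r /\ forall j, ~ R j r) /\
      (forall i, N i -> exists r, In r roots /\ clos_refl_trans nom R r i)) /\
  (forall i, exists children : list nom, forall j, R i j -> In j children).

(* Main.v *)
Require Import Defs.
From Stdlib Require Import List Relations Lia Classical Arith.
Import ListNotations.

Fixpoint fsize (f : form) : nat :=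
  match f with
  | PVar _ | Nom _ => 1
  | Neg g | Dia g | At _ g => S (fsize g)
  | And g h => S (fsize g + fsize h)
  end.

Lemma subf_refl f : subf f f.
Proof. destruct f; simpl; left; reflexivity. Qed.

Lemma subf_trans h : forall f g, subf f g -> subf g h -> subf f h.
Proof.
  induction h; intros f g Hfg [E|H]; try (subst; exact Hfg); simpl; right;
  try contradiction; eauto.
  destruct H as [H|H]; [left|right]; eauto.
Qed.

Lemma subf_size h : forall f, subf f h -> fsize f <= fsize h.
Proof.
  induction h; simpl; intros f [E|H]; try (subst; simpl; lia); try contradiction.
  - specialize (IHh _ H); lia.
  - destruct H as [H|H]; [specialize (IHh1 _ H)|specialize (IHh2 _ H)]; lia.
  - specialize (IHh _ H); lia.
  - specialize (IHh _ H); lia.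
Qed.

Lemma qsub_proper p h f : qsub p h -> subf f h -> fsize f < fsize h -> subf f p.
Proof.
  intros [H|[g [E H]]] Hf Hs.
  - exact (subf_trans _ _ _ Hf H).
  - subst h. simpl in Hf. destruct Hf as [E|Hf].
    + subst; lia.
    + exact (subf_trans _ _ _ Hf H).
Qed.

Fixpoint subfs (g : form) : list form :=
  g :: match g with
       | PVar _ | Nom _ => []
       | Neg h | Dia h | At _ h => subfs h
       | And a b => subfs a ++ subfs b
       end.

Lemma subfs_in g : forall f, subf f g -> In f (subfs g).
Proof.
  induction g; simpl; intros f [E|H]; try (left; auto; fail); try contradiction;
  right; auto.
  destruct H; apply in_or_app; auto.
Qed.

Definition classf (phi0 : form) (S : state) (x : nom) (f : form) : Prop :=
  qsub phi0 f \/ (exists k, f = Nom k) \/ (exists k, f = Neg (Dia (Nom k))) \/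
  (exists k, f = Neg (Nom k)) \/ (exists k, f = Dia (Nom k) /\ In (x, k) (acc S)).

Definition Inv (i0 : nom) (p : form) (S : state) : Prop :=
  In (i0, p) (fs S) /\
  (forall x f, In (x, f) (fs S) -> classf p S x f) /\
  (forall i j, In (i, j) (acc S) -> In (i, Dia (Nom j)) (fs S)) /\
  (forall k, occurs S k -> In k (i0 :: noms p) \/ exists i, In (i, k) (acc S)) /\
  NoDup (map snd (acc S)) /\
  Forall2 (fun q t => fst t = fst q /\ exists f, snd t = Dia f /\ subf (Dia f) p)
          (acc S) (dused S) /\
  NoDup (dused S) /\
  (forall i k, In (i, k) (acc S) -> ~ In k (i0 :: noms p)).

Lemma occ_intro S j f k : In (j, f) (fs S) -> (k = j \/ In k (noms f)) -> occurs S k.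
Proof. intros; exists j, f; auto. Qed.

Lemma occurs_add S l k : occurs (add S l) k ->
  occurs S k \/ exists j f, In (j, f) l /\ (k = j \/ In k (noms f)).
Proof.
  intros [j [f [H1 H2]]]. simpl in H1. apply in_app_or in H1.
  destruct H1; [left; exists j, f|right; exists j, f]; auto.
Qed.

Lemma classf_mono p S S' x f : incl (acc S) (acc S') -> classf p S x f -> classf p S' x f.
Proof.
  intros Hi [H|[H|[H|[H|[k [E H]]]]]];
  [left|right;left|right;right;left|right;right;right;left|
   right;right;right;right; exists k; split]; auto.
Qed.

Lemma Inv_add i0 p S l : Inv i0 p S ->
  (forall x f, In (x, f) l -> classf p S x f) ->
  (forall j f k, In (j, f) l -> (k = j \/ In k (noms f)) -> occurs S k) ->
  Inv i0 p (add S l).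
Proof.
  intros (H1 & H2 & H3 & H4 & H5 & H6 & H7 & H8) Hc Ho.
  refine (conj _ (conj _ (conj _ (conj _ (conj _ (conj _ (conj _ _))))))); simpl.
  - apply in_or_app; left; auto.
  - intros x f Hin. apply in_app_or in Hin. destruct Hin; [apply H2|apply Hc]; auto.
  - intros i j Hin. apply in_or_app; left; auto.
  - intros k Hk. destruct (occurs_add _ _ _ Hk) as [Hk'|[j [f [Hj Hk']]]];
    apply H4; eauto.
  - exact H5.
  - exact H6.
  - exact H7.
  - exact H8.
Qed.

Ltac inv_class H2 H :=
  destruct (H2 _ _ H) as [Hq|[[kk E]|[[kk E]|[[kk E]|[kk [E Ea]]]]]]; try congruence.

Lemma dia_class p S i f : classf p S i (Dia f) -> ~ is_acc_formula S (i, Dia f) ->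
  subf (Dia f) p.
Proof.
  intros [Hq|[[kk E]|[[kk E]|[[kk E]|[kk [E Ea]]]]]] Hn; try congruence.
  - destruct Hq as [Hq|[g [E _]]]; [exact Hq|congruence].
  - exfalso; apply Hn. exists kk. simpl. split; auto.
Qed.

Lemma Inv_step i0 p S S' : Inv i0 p S -> rule_app p S S' -> Inv i0 p S'.
Proof.
  intros HI Hr. pose proof HI as (H1 & H2 & H3 & H4 & H5 & H6 & H7 & H8).
  destruct Hr.
  -
    apply Inv_add; auto; [intros x g Hin | intros j g k Hin Hk]; simpl in Hin;
    destruct Hin as [Hin|[]]; injection Hin; intros; subst.
    + inv_class H2 H. left; left. eapply qsub_proper; [exact Hq| |]; simpl; auto using subf_refl; lia.
    + destruct Hk as [->|Hk]; eapply occ_intro; try exact H; simpl; auto.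
  -
    apply Inv_add; auto; [intros x h Hin | intros j h k Hin Hk]; simpl in Hin;
    destruct Hin as [Hin|[Hin|[]]]; injection Hin; intros; subst.
    + inv_class H2 H. left; left. eapply qsub_proper; [exact Hq| |]; simpl; auto using subf_refl; lia.
    + inv_class H2 H. left; left. eapply qsub_proper; [exact Hq| |]; simpl; auto using subf_refl; lia.
    + destruct Hk as [->|Hk]; eapply occ_intro; try exact H; simpl; auto.
      right; simpl; apply in_or_app; auto.
    + destruct Hk as [->|Hk]; eapply occ_intro; try exact H; simpl; auto.
      right; simpl; apply in_or_app; auto.
  -
    apply Inv_add; auto; [intros x h Hin | intros j h k Hin Hk]; simpl in Hin;
    destruct Hin as [Hin|[]]; injection Hin; intros; subst.
    + inv_class H2 H. left; right; exists f; split; auto. eapply qsub_proper; [exact Hq| |]; simpl; auto using subf_refl; lia.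
    + destruct Hk as [->|Hk]; eapply occ_intro; try exact H; simpl; auto.
      right; simpl; apply in_or_app; auto.
  -
    apply Inv_add; auto; [intros x h Hin | intros j h k Hin Hk]; simpl in Hin;
    destruct Hin as [Hin|[]]; injection Hin; intros; subst.
    + inv_class H2 H. left; right; exists g; split; auto. eapply qsub_proper; [exact Hq| |]; simpl; auto using subf_refl; lia.
    + destruct Hk as [->|Hk]; eapply occ_intro; try exact H; simpl; auto.
      right; simpl; apply in_or_app; auto.
  -
    assert (Hsub : subf (Dia f) p) by (apply (dia_class p S i); auto).
    assert (Hfs : subf f p) by (eapply subf_trans; [|exact Hsub]; simpl; auto using subf_refl).
    assert (Hocc0 : forall k, In k (i0 :: noms p) -> occurs S k).
    { intros k [Hk|Hk]; eapply occ_intro; eauto. }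
    refine (conj _ (conj _ (conj _ (conj _ (conj _ (conj _ (conj _ _))))))); simpl.
    + apply in_or_app; left; auto.
    + intros x g Hin. apply in_app_or in Hin. destruct Hin as [Hin|Hin].
      * eapply classf_mono; [|apply H2; exact Hin]. intros a Ha; apply in_or_app; auto.
      * destruct Hin as [Hin|[Hin|[]]]; injection Hin; intros; subst.
        -- right; right; right; right. exists j; split; auto. apply in_or_app; right; left; auto.
        -- left; left; auto.
    + intros a b Hin. apply in_app_or in Hin. destruct Hin as [Hin|[Hin|[]]].
      * apply in_or_app; left; auto.
      * injection Hin; intros; subst. apply in_or_app; right; left; auto.
    + intros k Hk. destruct Hk as [a [g [Hin Hk]]]. simpl in Hin.
      apply in_app_or in Hin. destruct Hin as [Hin|Hin].
      * destruct (H4 k) as [Hr|[b Hb]]; [exists a, g; auto|auto|].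
        right; exists b; apply in_or_app; auto.
      * destruct Hin as [Hin|[Hin|[]]]; injection Hin; intros; subst.
        -- destruct Hk as [->|[Hk|[]]].
           ++ edestruct H4 as [Hr|[b Hb]]; [eapply occ_intro; [exact H|left; reflexivity]|eauto|].
              right; exists b; apply in_or_app; auto.
           ++ subst. right; eexists; apply in_or_app; right; left; reflexivity.
        -- destruct Hk as [->|Hk].
           ++ right; eexists; apply in_or_app; right; left; reflexivity.
           ++ destruct (H4 k) as [Hr|[b Hb]]; [eapply occ_intro; [exact H|right; exact Hk]|auto|].
              right; exists b; apply in_or_app; auto.
    + rewrite map_app. apply NoDup_app; auto.
      * constructor; auto. constructor.
      * intros a Ha Hb. simpl in Hb. destruct Hb as [Hb|[]]. subst a.
        apply in_map_iff in Ha. destruct Ha as [[a b] [Eb Hab]]. simpl in Eb; subst b.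
        apply H11. eapply occ_intro; [apply H3; exact Hab|]. right; simpl; auto.
    + apply Forall2_app; auto. constructor; [|constructor]. simpl; split; auto.
      exists f; split; auto.
    + apply NoDup_app; auto.
      * constructor; auto. constructor.
      * intros a Ha Hb. destruct Hb as [Hb|[]]. subst a. contradiction.
    + intros a b Hin. apply in_app_or in Hin. destruct Hin as [Hin|[Hin|[]]].
      * apply H8 with a; auto.
      * injection Hin; intros; subst. intro Hb. apply H11. apply Hocc0; auto.
  -
    apply Inv_add; auto; [intros x h Hin | intros k h m Hin Hk]; simpl in Hin;
    destruct Hin as [Hin|[]]; injection Hin; intros; subst.
    + inv_class H2 H.
      * left; right; exists f; split; auto. eapply qsub_proper; [exact Hq| |]; simpl; auto using subf_refl; lia.
      * injection E; intros; subst. right; right; right; left; exists kk; auto.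
    + destruct Hk as [->|Hk].
      * eapply occ_intro; [exact H0|]. right; simpl; auto.
      * eapply occ_intro; [exact H|]. right; simpl; auto.
  -
    apply Inv_add; auto; [intros x h Hin | intros k h m Hin Hk]; simpl in Hin;
    destruct Hin as [Hin|[]]; injection Hin; intros; subst.
    + unfold Box in H. inv_class H2 H. left; left. eapply qsub_proper; [exact Hq| |]; simpl; auto using subf_refl; lia.
    + destruct Hk as [->|Hk].
      * eapply occ_intro; [exact H0|]. left; reflexivity.
      * eapply occ_intro; [exact H|]. right; exact Hk.
  -
    apply Inv_add; auto; [intros x h Hin | intros k h m Hin Hk]; simpl in Hin;
    destruct Hin as [Hin|[]]; injection Hin; intros; subst.
    + inv_class H2 H. left; left. eapply qsub_proper; [exact Hq| |]; simpl; auto using subf_refl; lia.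
    + destruct Hk as [->|Hk]; eapply occ_intro; try exact H; simpl; auto.
  -
    apply Inv_add; auto; [intros x h Hin | intros k h m Hin Hk]; simpl in Hin;
    destruct Hin as [Hin|[]]; injection Hin; intros; subst.
    + inv_class H2 H. left; right; exists f; split; auto. eapply qsub_proper; [exact Hq| |]; simpl; auto using subf_refl; lia.
    + destruct Hk as [->|Hk]; eapply occ_intro; try exact H; simpl; auto.
  -
    apply Inv_add; auto; [intros x h Hin | intros k h m Hin Hk]; simpl in Hin;
    destruct Hin as [Hin|[]]; injection Hin; intros; subst.
    + destruct (H2 _ _ H) as [Hq|[Hb|[Hc|[Hd|[kk [E Ea]]]]]];
      [left|right;left|right;right;left|right;right;right;left|]; auto.
      exfalso. apply H0. exists kk; simpl; auto.
    + destruct Hk as [->|Hk].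
      * eapply occ_intro; [exact H9|]. right; simpl; auto.
      * eapply occ_intro; [exact H|right; exact Hk].
  -
    apply Inv_add; auto; [intros x h Hin | intros k h m Hin Hk]; simpl in Hin;
    destruct Hin as [Hin|[]]; injection Hin; intros; subst.
    + right; left; eauto.
    + destruct Hk as [->|[->|[]]]; auto.
  -
    apply Inv_add; auto; [intros x h Hin | intros k h m Hin Hk]; simpl in Hin;
    destruct Hin as [Hin|[]]; injection Hin; intros; subst.
    + right; right; left; eauto.
    + destruct Hk as [->|[->|[]]]; auto.
Qed.

Lemma Inv_init i0 p : Inv i0 p (init_state i0 p).
Proof.
  refine (conj _ (conj _ (conj _ (conj _ (conj _ (conj _ (conj _ _))))))); simpl.
  - left; reflexivity.
  - intros x f [E|[]]. injection E; intros; subst. left; left; apply subf_refl.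
  - intros i j [].
  - intros k [j [f [[E|[]] Hk]]]. injection E; intros; subst. left.
    destruct Hk as [->|Hk]; [left|right]; auto.
  - constructor.
  - constructor.
  - constructor.
  - intros i k [].
Qed.

Lemma stage i0 p th : is_branch i0 p th ->
  forall n, th (S n) = th n \/ rule_app p (th n) (th (S n)).
Proof.
  intros [_ Hb] n. destruct (Hb n) as [[_ [H _]]|[H _]]; auto.
Qed.

Lemma branch_inv i0 p th : is_branch i0 p th -> forall n, Inv i0 p (th n).
Proof.
  intros Hb n. induction n.
  - destruct Hb as [H0 _]. rewrite H0. apply Inv_init.
  - destruct (stage _ _ _ Hb n) as [E|R]; [rewrite E; auto|eapply Inv_step; eauto].
Qed.

Lemma rule_mono p S S' : rule_app p S S' ->
  (exists e, fs S' = fs S ++ e) /\ (exists e, acc S' = acc S ++ e).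
Proof.
  intros Hr; destruct Hr; simpl; split; eexists;
  try (rewrite app_nil_r; reflexivity); reflexivity.
Qed.

Lemma rule_acc p S S' : rule_app p S S' -> acc S' = acc S \/
  exists i j f, acc S' = acc S ++ [(i, j)] /\ ~ occurs S j /\ In (i, Dia f) (fs S).
Proof.
  intros Hr; destruct Hr; simpl; auto.
  right; exists i, j, f; auto.
Qed.

Lemma mono_stages i0 p th : is_branch i0 p th -> forall n m, n <= m ->
  (exists e, fs (th m) = fs (th n) ++ e) /\ (exists e, acc (th m) = acc (th n) ++ e).
Proof.
  intros Hb n m Hle. induction Hle.
  - split; exists []; rewrite app_nil_r; reflexivity.
  - destruct IHHle as [[e1 E1] [e2 E2]].
    destruct (stage _ _ _ Hb m) as [E|R].
    + rewrite E; split; eauto.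
    + destruct (rule_mono _ _ _ R) as [[e3 E3] [e4 E4]].
      split; [exists (e1 ++ e3)|exists (e2 ++ e4)]; rewrite app_assoc; congruence.
Qed.

Lemma acc_incl i0 p th : is_branch i0 p th -> forall n m x, n <= m ->
  In x (acc (th n)) -> In x (acc (th m)).
Proof.
  intros Hb n m x Hle H. destruct (mono_stages _ _ _ Hb n m Hle) as [_ [e E]].
  rewrite E; apply in_or_app; auto.
Qed.

Lemma occ_mono i0 p th : is_branch i0 p th -> forall n m k, n <= m ->
  occurs (th n) k -> occurs (th m) k.
Proof.
  intros Hb n m k Hle [j [f [H1 H2]]]. destruct (mono_stages _ _ _ Hb n m Hle) as [[e E] _].
  exists j, f; split; auto. rewrite E; apply in_or_app; auto.
Qed.

Lemma Kfresh i0 p th : is_branch i0 p th -> forall n m i j,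
  occurs (th n) j -> In (i, j) (acc (th m)) -> In (i, j) (acc (th n)).
Proof.
  intros Hb n m i j Ho Hm.
  destruct (Nat.le_ge_cases m n) as [Hle|Hle].
  - eapply acc_incl; eauto.
  - assert (Hd : forall d, In (i, j) (acc (th (n + d))) -> In (i, j) (acc (th n))).
    { induction d.
      - rewrite Nat.add_0_r; auto.
      - rewrite Nat.add_succ_r. intros H.
        destruct (stage _ _ _ Hb (n + d)) as [E|R].
        + rewrite E in H; auto.
        + destruct (rule_acc _ _ _ R) as [E|[a [b [f [E [Hno _]]]]]].
          * rewrite E in H; auto.
          * rewrite E in H. apply in_app_or in H. destruct H as [H|[H|[]]]; auto.
            injection H; intros; subst. exfalso; apply Hno.
            apply (occ_mono _ _ _ Hb n); [lia|exact Ho]. }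
    apply (Hd (m - n)). replace (n + (m - n)) with m by lia. auto.
Qed.

Lemma gen_dom i0 p th : is_branch i0 p th -> forall i j, gen th i j ->
  branch_noms th i /\ branch_noms th j.
Proof.
  intros Hb i j [n Hn].
  destruct (branch_inv _ _ _ Hb n) as (_ & _ & H3 & _).
  specialize (H3 _ _ Hn).
  split; exists n; eapply occ_intro; eauto; simpl; auto.
Qed.

Lemma occ_acc i0 p th : is_branch i0 p th -> forall n j, occurs (th n) j -> Acc (gen th) j.
Proof.
  intros Hb n. induction n; intros j Hj; constructor; intros i [m Hm];
  apply (Kfresh _ _ _ Hb _ _ _ _ Hj) in Hm.
  - destruct Hb as [H0 _]. rewrite H0 in Hm. simpl in Hm. contradiction.
  - apply IHn.
    destruct (branch_inv _ _ _ Hb n) as (_ & _ & H3 & _).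
    destruct (stage _ _ _ Hb n) as [E|R].
    + rewrite E in Hm. eapply occ_intro; [apply H3; exact Hm|left; reflexivity].
    + destruct (rule_acc _ _ _ R) as [E|[a [b [f [E [Hno Hf]]]]]].
      * rewrite E in Hm. eapply occ_intro; [apply H3; exact Hm|left; reflexivity].
      * rewrite E in Hm. apply in_app_or in Hm. destruct Hm as [Hm|[Hm|[]]].
        -- eapply occ_intro; [apply H3; exact Hm|left; reflexivity].
        -- injection Hm; intros; subst. eapply occ_intro; [exact Hf|left; reflexivity].
Qed.

Lemma nodup_snd {A B : Type} (l : list (A * B)) a c b :
  NoDup (map snd l) -> In (a, b) l -> In (c, b) l -> a = c.
Proof.
  induction l as [|x l IH]; simpl; [tauto|]. intros Hn H1 H2.
  inversion Hn; subst.
  destruct H1 as [H1|H1]; destruct H2 as [H2|H2].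
  - subst x. injection H2. intros; subst. reflexivity.
  - subst x. exfalso. match goal with H : ~ In _ _ |- _ => apply H end.
    apply in_map_iff; exists (c, b); auto.
  - subst x. exfalso. match goal with H : ~ In _ _ |- _ => apply H end.
    apply in_map_iff; exists (a, b); auto.
  - auto.
Qed.

Lemma max_bound K : forall (g : nat -> nat), (forall m, g m <= K) ->
  exists n, forall m, g m <= g n.
Proof.
  induction K; intros g H.
  - exists 0; intros m; specialize (H m); lia.
  - destruct (classic (exists n, g n = S K)) as [[n Hn]|Hno].
    + exists n; intros m; specialize (H m); lia.
    + apply IHK. intros m. specialize (H m).
      assert (g m <> S K) by (intro; apply Hno; eauto). lia.
Qed.

Lemma F2len {A B C : Type} (R : (nat * A) -> (nat * B) -> Prop) (i : nat) l1 l2 :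
  Forall2 R l1 l2 -> (forall x y, R x y -> fst y = fst x) ->
  length (filter (fun q => Nat.eqb (fst q) i) l1) =
  length (filter (fun t => Nat.eqb (fst t) i) l2).
Proof.
  intros HF HR. induction HF; simpl; auto.
  rewrite (HR _ _ H). destruct (Nat.eqb (fst x) i); simpl; auto.
Qed.

Lemma Forall2_in_r {A B : Type} (R : A -> B -> Prop) l1 l2 y :
  Forall2 R l1 l2 -> In y l2 -> exists x, R x y.
Proof.
  intros HF; induction HF; simpl; [tauto|]. intros [E|H0]; [subst; eauto|auto].
Qed.

Lemma child_bound i0 p S i : Inv i0 p S ->
  length (filter (fun q => Nat.eqb (fst q) i) (acc S)) <= length (subfs p).
Proof.
  intros (_ & _ & _ & _ & _ & H6 & H7 & _).
  rewrite (@F2len nom form unit _ i _ _ H6); [|intros x y [E _]; exact E].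
  rewrite <- (length_map (fun f => (i, f)) (subfs p)).
  apply NoDup_incl_length; [apply NoDup_filter; auto|].
  intros t Ht. apply filter_In in Ht. destruct Ht as [Ht Hi].
  destruct (Forall2_in_r _ _ _ _ H6 Ht) as [x [E [f [Ef Hs]]]].
  destruct t as [a g]. simpl in *. apply Nat.eqb_eq in Hi. subst.
  apply in_map. apply subfs_in; auto.
Qed.


Lemma filter_app_grow {A : Type} (f : A -> bool) l e x : In x e -> f x = true ->
  length (filter f (l ++ e)) <= length (filter f l) -> False.
Proof.
  intros Hx Hf H. rewrite filter_app, length_app in H.
  assert (Hin : In x (filter f e)) by (apply filter_In; auto).
  destruct (filter f e); simpl in *; [contradiction|lia].
Qed.

Theorem lemma3 (i0 : nom) (phi0 : form) (th : nat -> state) :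
  ~ In i0 (noms phi0) ->
  is_branch i0 phi0 th ->
  finite_forest_wf_fb (branch_noms th) (gen th).
Proof.
  intros _ Hb.
  assert (Hwf : well_founded (gen th)).
  { intros j. destruct (classic (branch_noms th j)) as [[n Hn]|Hno].
    - eapply occ_acc; eauto.
    - constructor; intros i Hg. exfalso; apply Hno.
      exact (proj2 (gen_dom _ _ _ Hb _ _ Hg)). }
  refine (conj _ (conj _ (conj Hwf (conj _ _)))).
  - exact (gen_dom _ _ _ Hb).
  - intros i j k [n Hn] [m Hm].
    destruct (branch_inv _ _ _ Hb (Nat.max n m)) as (_ & _ & _ & _ & H5 & _).
    eapply nodup_snd; [exact H5| |].
    + eapply acc_incl; [exact Hb| |exact Hn]. lia.
    + eapply acc_incl; [exact Hb| |exact Hm]. lia.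
  - exists (i0 :: noms phi0). split.
    + intros r Hr; split.
      * exists 0. destruct Hb as [H0 _]. rewrite H0.
        exists i0, phi0; split; [left; reflexivity|].
        destruct Hr as [Hr|Hr]; [left; auto|right; auto].
      * intros j [m Hm].
        destruct (branch_inv _ _ _ Hb m) as (_ & _ & _ & _ & _ & _ & _ & H8).
        exact (H8 _ _ Hm Hr).
    + intros i. induction i as [i IH] using (well_founded_ind Hwf).
      intros [n Hn].
      destruct (branch_inv _ _ _ Hb n) as (_ & _ & _ & H4 & _).
      destruct (H4 _ Hn) as [Hr|[a Ha]].
      * exists i; split; auto. apply rt_refl.
      * assert (Hg : gen th a i) by (exists n; auto).
        destruct (IH a Hg (proj1 (gen_dom _ _ _ Hb _ _ Hg))) as [r [Hr Hrt]].
        exists r; split; auto. eapply rt_trans; [exact Hrt|apply rt_step; exact Hg].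
  - intros i.
    set (g := fun m => length (filter (fun q => Nat.eqb (fst q) i) (acc (th m)))).
    destruct (max_bound (length (subfs phi0)) g) as [ns Hns].
    { intros m; unfold g; eapply child_bound; apply (branch_inv _ _ _ Hb). }
    exists (map snd (acc (th ns))). intros j [m Hm].
    destruct (mono_stages _ _ _ Hb ns (Nat.max m ns) ltac:(lia)) as [_ [e E]].
    assert (Hq : In (i, j) (acc (th (Nat.max m ns)))) by
      (eapply acc_incl; [exact Hb| |exact Hm]; lia).
    rewrite E in Hq. apply in_app_or in Hq. destruct Hq as [Hq|Hq].
    + change j with (snd (i, j)). apply in_map; auto.
    + exfalso. specialize (Hns (Nat.max m ns)). unfold g in Hns. rewrite E in Hns.
      exact (filter_app_grow _ _ _ _ Hq (Nat.eqb_refl i) Hns).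
Qed.
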